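(* Let $\Lambda>0$, $r>0$, $\delta=1/\Lambda$, let $\mathcal{L}$ be a bounded measurable Lagrangian with $\mathcal{L}\ge0$ and $M=\sup\mathcal{L}$, and assume $M r^{D-1}/\Lambda\le 1$. Then for every cylindrical $F=f(g_1(\phi),\dots,g_k(\phi))$ (with $f$ real) one has $$\left|\frac{\int F[\phi]F_\Theta[\phi]\left(e^{-\int_{B^+_{2\delta}(0,r)\cup B^-_{2\delta}(0,r)}\mathcal{L}(\phi_\Lambda)}-e^{-\int_{B(0,r)}\mathcal{L}(\phi_\Lambda)}\right)d\mu[\phi]}{\int e^{-\int_{B(0,r)}\mathcal{L}(\phi_\Lambda)}\,d\mu[\phi]}\right|\le c\,\|f\|_{L^\infty}^2\,\frac{M r^{D-1}}{\Lambda},$$ where $c$ depends only on $D$.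
   Context: Fix integers $D,K\ge1$. $\Phi'$ is the space of $\mathbb{R}^K$-valued (tempered) distributions on $\mathbb{R}^D$. $\mu$ is the centered Gaussian measure on $\Phi'$ with covariance $C(f,g)=(2\pi)^{-D}\int\frac{\overline{\widehat f(p)}\cdot\widehat g(p)}{p^2+1}dp$. $\sigma$ is a smooth, nonnegative, rotationally invariant function supported in $B(0,1)$ with $\int\sigma=1$; $\sigma_\Lambda(x)=\Lambda^D\sigma(\Lambda x)$, $\phi_\Lambda=\phi*\sigma_\Lambda$. For bounded measurable $\mathcal{L}:(\mathbb{R}^K)^{l+1}\to\mathbb{R}$, $\mathcal{L}(\phi_\Lambda)(x):=\mathcal{L}(\phi_\Lambda(x),\nabla^2\phi_\Lambda(x),\dots,(\nabla^2)^l\phi_\Lambda(x))$, and $\int_A\mathcal{L}(\phi_\Lambda)$ means $\int_A\mathcal{L}(\phi_\Lambda)(x)dx$. Cylindrical function: $F[\phi]=f(g_1(\phi),\dots,g_k(\phi))$, $g_i\in C_0^\infty(\mathbb{R}^D;\mathbb{R}^K)$, $f$ bounded continuous. $\Theta(x_1,\dots,x_D)=(x_1,\dots,-x_D)$, $(\Theta\phi)(g)=\phi(g\circ\Theta)$, $F_\Theta[\phi]=F[\Theta\phi]$. $\Pi^\pm_\delta=\{\pm x_D>\delta\}$, $B^\pm_\delta(0,r)=B(0,r)\cap\Pi^\pm_\delta$. *)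

(* Defs.v *)
From HB Require Import structures.
From mathcomp Require Import all_boot all_order all_algebra.
From mathcomp Require Import all_classical all_reals all_analysis.

Set Implicit Arguments.
Unset Strict Implicit.
Unset Printing Implicit Defensive.

Import Order.TTheory GRing.Theory Num.Theory.
Import numFieldNormedType.Exports.
Local Open Scope classical_set_scope.
Local Open Scope ring_scope.

Section Defs.
Context {R : realType}.

Definition tdot (D : nat) (x y : D.-tuple R) : R :=
  \sum_(i < D) tnth x i * tnth y i.
Definition tnorm (D : nat) (x : D.-tuple R) : R := Num.sqrt (tdot x x).
Definition tsub (D : nat) (x y : D.-tuple R) : D.-tuple R :=
  [tuple tnth x i - tnth y i | i < D].
Definition tscale (D : nat) (a : R) (x : D.-tuple R) : D.-tuple R :=
  [tuple a * tnth x i | i < D].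
Definition tshift (D : nat) (x : D.-tuple R) (i : 'I_D) (t : R) : D.-tuple R :=
  [tuple if j == i then tnth x j + t else tnth x j | j < D].
Definition lastc (D : nat) (x : D.-tuple R) : R := nth 0 x D.-1.
Definition Theta (D : nat) (x : D.-tuple R) : D.-tuple R :=
  [tuple if val j == D.-1 then - tnth x j else tnth x j | j < D].

Definition tball0 (D : nat) (r : R) : set (D.-tuple R) := [set x | tnorm x < r].
Definition ballP (D : nat) (delta r : R) : set (D.-tuple R) :=
  @tball0 D r `&` [set x | delta < lastc x].
Definition ballM (D : nat) (delta r : R) : set (D.-tuple R) :=
  @tball0 D r `&` [set x | lastc x < - delta].

(* Lebesgue measure on R^D: the measure on the (Borel = product) sigma-algebra
   of D.-tuple R giving each box its volume (this characterizes it uniquely) *)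
Definition is_lebesgue (D : nat) (leb : {measure set (D.-tuple R) -> \bar R}) :=
  forall a b : D.-tuple R, (forall i, tnth a i <= tnth b i) ->
    leb [set x | forall i, tnth a i <= tnth x i <= tnth b i] =
    (\prod_(i < D) (tnth b i - tnth a i))%:E.

Definition partial (D : nat) (i : 'I_D) (h : D.-tuple R -> R) : D.-tuple R -> R :=
  fun x => derive1 (fun t : R => h (tshift x i t)) 0.
Definition iter_partial (D : nat) (l : seq 'I_D) (h : D.-tuple R -> R) :=
  foldr (@partial D) h l.
Definition tcontinuous (D : nat) (h : D.-tuple R -> R) :=
  forall x (e : R), 0 < e -> exists2 d : R, 0 < d &
    forall y, tnorm (tsub y x) < d -> `|h y - h x| < e.
Definition smooth (D : nat) (h : D.-tuple R -> R) :=
  forall l : seq 'I_D, tcontinuous (iter_partial l h) /\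
    forall i x, derivable (fun t : R => iter_partial l h (tshift x i t)) 0 1.
Definition compact_support (D : nat) (h : D.-tuple R -> R) :=
  exists rho : R, forall x, rho <= tnorm x -> h x = 0.
Definition lap (D : nat) (h : D.-tuple R -> R) : D.-tuple R -> R :=
  fun x => \sum_(i < D) partial i (partial i h) x.

Definition testfun (D K : nat) := 'I_K -> D.-tuple R -> R.
Definition is_test (D K : nat) (g : testfun D K) :=
  forall k, smooth (g k) /\ compact_support (g k).

(* ---------- Tempered distributions, seen through their values on
   C_0^oo (dense in Schwartz space): linear, with a Schwartz-seminorm bound ---- *)
Definition is_tempered (D K : nat) (phi : testfun D K -> R) :=
  (forall (a b : R) (g1 g2 : testfun D K), is_test g1 -> is_test g2 ->
     phi (fun k x => a * g1 k x + b * g2 k x) = a * phi g1 + b * phi g2) /\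
  exists (C : R) (N : nat), forall g, is_test g -> forall s : R,
    (forall k (l : seq 'I_D) x, (size l <= N)%N ->
       (1 + tnorm x ^+ 2) ^+ N * `|iter_partial l (g k) x| <= s) ->
    `|phi g| <= C * s.

Definition Phi' (D K : nat) := {phi : testfun D K -> R | is_tempered phi}.

Lemma tempered0 (D K : nat) : is_tempered (fun _ : testfun D K => 0 : R).
Proof.
split=> [a b g1 g2 _ _|]; first by rewrite mulr0 mulr0 addr0.
by exists 0, 0%N => g _ s _; rewrite normr0 mul0r.
Qed.

Definition phi0 (D K : nat) : Phi' D K := exist _ _ (@tempered0 D K).

HB.instance Definition _ (D K : nat) := gen_eqMixin (Phi' D K).
HB.instance Definition _ (D K : nat) := gen_choiceMixin (Phi' D K).
HB.instance Definition _ (D K : nat) := isPointed.Build (Phi' D K) (@phi0 D K).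

Definition cylinders (D K : nat) : set (set (Phi' D K)) :=
  [set E | exists (g : testfun D K) (A : set R), is_test g /\ measurable A /\
     E = (fun phi : Phi' D K => sval phi g) @^-1` A].

Definition PhiM (D K : nat) : measurableType _ := g_sigma_algebraType (@cylinders D K).

Definition ThetaPhi (D K : nat) (phi : Phi' D K) (g : testfun D K) : R :=
  sval phi (fun k x => g k (Theta x)).

(* ---------- Covariance C(g,g) = (2 pi)^{-D} int |hat g(p)|^2/(p^2+1) dp,
   |hat g(p)|^2 = sum_k ((int g_k cos(p.x))^2 + (int g_k sin(p.x))^2) ---------- *)
Definition fourier_cos (D : nat) (leb : {measure set (D.-tuple R) -> \bar R})
  (h : D.-tuple R -> R) (p : D.-tuple R) : R :=
  Rintegral leb setT (fun x => h x * cos (tdot p x)).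
Definition fourier_sin (D : nat) (leb : {measure set (D.-tuple R) -> \bar R})
  (h : D.-tuple R -> R) (p : D.-tuple R) : R :=
  Rintegral leb setT (fun x => h x * sin (tdot p x)).
Definition covC (D K : nat) (leb : {measure set (D.-tuple R) -> \bar R})
  (g : testfun D K) : R :=
  (pi *+ 2) ^- D * Rintegral leb setT (fun p =>
    (\sum_(k < K) (fourier_cos leb (g k) p ^+ 2 + fourier_sin leb (g k) p ^+ 2))
    / (tnorm p ^+ 2 + 1)).

(* mu is the centered Gaussian measure with covC C:
   characteristic functional int e^{i phi(g)} dmu = e^{-C(g,g)/2} *)
Definition is_gaussian (D K : nat) (leb : {measure set (D.-tuple R) -> \bar R})
  (mu : probability (PhiM D K) R) :=
  forall g : testfun D K, is_test g ->
    (\int[mu]_phi (cos (sval phi g))%:E = (expR (- covC leb g / 2))%:E)%E /\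
    (\int[mu]_phi (sin (sval phi g))%:E = 0)%E.

Definition sigmaL (D : nat) (sigma : D.-tuple R -> R) (Lam : R) (x : D.-tuple R) : R :=
  Lam ^+ D * sigma (tscale Lam x).
(* k-th component of phi_Lambda = phi * sigma_Lambda at x *)
Definition phiLam (D K : nat) (sigma : D.-tuple R -> R) (Lam : R)
  (phi : Phi' D K) (k : 'I_K) (x : D.-tuple R) : R :=
  sval phi (fun k' y => if k' == k then sigmaL sigma Lam (tsub x y) else 0).
Definition LagField (D K l : nat) (Lag : l.+1.-tuple (K.-tuple R) -> R)
  (sigma : D.-tuple R -> R) (Lam : R) (phi : Phi' D K) (x : D.-tuple R) : R :=
  Lag [tuple [tuple iter j (@lap D) (phiLam sigma Lam phi k) x | k < K] | j < l.+1].

End Defs.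

(* Main.v *)
Require Import Defs.
From HB Require Import structures.
From mathcomp Require Import all_boot all_order all_algebra.
From mathcomp Require Import all_classical all_reals all_analysis.
Import Order.TTheory GRing.Theory Num.Theory.
Import numFieldNormedType.Exports.
Local Open Scope classical_set_scope.
Local Open Scope ring_scope.
From mathcomp Require Import lra ring.

Section gen.
Context d (T : measurableType d) (R : realType) (mu : {measure set T -> \bar R}).
Import HBNNSimple.

Lemma int_mono_dom (A B : set T) (f : T -> R) : (forall x, 0 <= f x) -> A `<=` B ->
  (\int[mu]_(x in A) (f x)%:E <= \int[mu]_(x in B) (f x)%:E)%E.
Proof.
move=> f0 AB; rewrite !ge0_integralE; try by move=> x _; rewrite lee_fin.
apply: ge_ereal_sup => _ [h hle <-]; apply: ereal_sup_ubound; exists h => // x.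
apply: le_trans (hle x) _; rewrite /patch; case: ifPn => xA.
  by rewrite ifT // inE; apply: AB; rewrite -inE.
by case: ifP => _ //; rewrite lee_fin.
Qed.

Lemma int_mono_fun (D : set T) (f g : T -> R) : (forall x, 0 <= f x) ->
  (forall x, f x <= g x) ->
  (\int[mu]_(x in D) (f x)%:E <= \int[mu]_(x in D) (g x)%:E)%E.
Proof.
move=> f0 fg; have g0 x : 0 <= g x by apply: le_trans (fg x).
rewrite !ge0_integralE; try by move=> x _; rewrite lee_fin.
apply: ge_ereal_sup => _ [h hle <-]; apply: ereal_sup_ubound; exists h => // x.
apply: le_trans (hle x) _; rewrite /patch; case: ifPn => // _.
by rewrite lee_fin.
Qed.

Lemma int_split (A B Q : set T) (f : T -> R) (M : R) : measurable Q ->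
  (forall x, 0 <= f x) -> (forall x, f x <= M) -> A `<=` B -> B `\` A `<=` Q ->
  (\int[mu]_(x in B) (f x)%:E <= \int[mu]_(x in A) (f x)%:E + M%:E * mu Q)%E.
Proof.
move=> mQ f0 fM AB BAQ.
have M0 : 0 <= M by apply: le_trans (fM point).
rewrite (@ge0_integralE _ _ _ _ B); last by move=> x _; rewrite lee_fin.
apply: ge_ereal_sup => _ [h hle <-].
have hM x : h x <= M.
  have := hle x; rewrite /patch; case: ifP => _; rewrite lee_fin => H.
    exact: le_trans H (fM x).
  exact: le_trans H M0.
have mQ' : measurable (~` Q) by exact: measurableC.
pose h1 := mul_nnsfun h (indic_nnsfun R mQ').
pose h2 := mul_nnsfun h (indic_nnsfun R mQ).
rewrite (@eq_sintegral _ _ _ mu (h1 \+ h2)%R); last first.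
  by move=> x /=; rewrite !measurable_realfun.mindicE in_setC; case: (x \in Q); rewrite /= ?mulr0 ?mulr1 ?addr0 ?add0r.
rewrite sintegralD; apply: leeD.
  rewrite ge0_integralE; last by move=> x _; rewrite lee_fin.
  apply: ereal_sup_ubound; exists h1 => // x /=; rewrite measurable_realfun.mindicE.
  case: (boolP (x \in ~` Q)) => xQ; last first.
    by rewrite mulr0 /patch; case: ifP => _; rewrite lee_fin.
  rewrite mulr1; apply: le_trans (hle x) _; rewrite /patch.
  case: ifPn => xB //.
    rewrite ifT //; rewrite inE; apply: contrapT => xA.
    by move: xQ; rewrite inE; apply; apply: BAQ; split => //; rewrite -inE.
  by case: ifP => _ //; rewrite lee_fin.
apply: (@le_trans _ _ (sintegral mu (scale_nnsfun (indic_nnsfun R mQ) M0))).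
  apply: le_sintegral => x /=; rewrite measurable_realfun.mindicE; apply: ler_wpM2r => //.
rewrite /= sintegralrM sintegral_indic //.
Qed.

End gen.

Section gen2.
Context d (T : measurableType d) (R : realType) (mu : {measure set T -> \bar R}).
Import HBNNSimple.

Lemma int_scale (D : set T) (w : T -> R) (K : R) : 0 < K -> (forall x, 0 <= w x) ->
  (\int[mu]_(x in D) (K * w x)%:E <= K%:E * \int[mu]_(x in D) (w x)%:E)%E.
Proof.
move=> K0 w0; rewrite !ge0_integralE.
apply: ge_ereal_sup => _ [h hle <-].
have Ki0 : 0 <= K^-1 by rewrite invr_ge0 ltW.
rewrite (@eq_sintegral _ _ _ mu (cst K \* (scale_nnsfun h Ki0))%R); last first.
  by move=> x /=; rewrite mulrA mulfV ?gt_eqF // mul1r.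
rewrite sintegralrM lee_pmul2l ?lte_fin //.
apply: ereal_sup_ubound; exists (scale_nnsfun h Ki0) => // x /=.
have := hle x; rewrite /patch; case: ifP => _; rewrite !lee_fin => H.
  by rewrite ler_pdivrMl.
exact: mulr_ge0_le0.
all: by move=> x _; rewrite lee_fin // mulr_ge0 // ltW.
Qed.

Lemma int_abs_le (phi w : T -> R) (K : R) : (mu setT < +oo)%E -> 0 < K ->
  (forall x, 0 <= w x <= 1) -> (forall x, `|phi x| <= K * w x) ->
  `|Rintegral mu setT phi| <= K * Rintegral mu setT w.
Proof.
move=> muT K0 w01 phiw.
have w0 x : 0 <= w x by case/andP: (w01 x).
set W := (\int[mu]_(x in setT) (w x)%:E)%E.
have W0 : (0 <= W)%E by apply: integral_ge0 => x _; rewrite lee_fin.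
have WT : (W <= mu setT)%E.
  apply: (@le_trans _ _ (\int[mu]_(x in setT) (cst 1%R x)%:E)%E).
    by apply: int_mono_fun => // x; case/andP: (w01 x).
  by rewrite [X in (X <= _)%E](_ : _ = \int[mu]_(x in setT) cst 1%E x)%E // integral_cst // mul1e.
have Wf : W \is a fin_num by rewrite ge0_fin_numE // (le_lt_trans WT).
have bnd (g : T -> R) : (forall x, 0 <= g x <= `|phi x|) ->
    exists p : R, (\int[mu]_(x in setT) (g x)%:E)%E = p%:E /\ 0 <= p <= K * fine W.
  move=> g01.
  have g0 x : 0 <= g x by case/andP: (g01 x).
  have P0 : (0 <= \int[mu]_(x in setT) (g x)%:E)%E by apply: integral_ge0 => x _; rewrite lee_fin.
  have PK : (\int[mu]_(x in setT) (g x)%:E <= K%:E * W)%E.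
    apply: le_trans _ (int_scale setT w K K0 w0).
    apply: int_mono_fun => // x; case/andP: (g01 x) => _ H; exact: le_trans H (phiw x).
  have Pf : (\int[mu]_(x in setT) (g x)%:E)%E \is a fin_num.
    rewrite ge0_fin_numE //; apply: le_lt_trans PK _.
    by rewrite -(fineK Wf) -EFinM ltry.
  exists (fine (\int[mu]_(x in setT) (g x)%:E)%E); split; first by rewrite fineK.
  rewrite fine_ge0 //=; rewrite -lee_fin fineK // EFinM fineK //.
have [p [Pe Pb]] := bnd (fun x => Num.max (phi x) 0) (fun x => ltac:( rewrite le_max lexx orbT /= ge_max normr_ge0 andbT; exact: ler_norm)).
have [n [Ne Nb]] := bnd (fun x => Num.max (- phi x) 0) (fun x => ltac:( rewrite le_max lexx orbT /= ge_max normr_ge0 andbT -normrN; exact: ler_norm)).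
rewrite /Rintegral integralE.
have -> : ((EFin \o phi)^\+)%E = fun x => (Num.max (phi x) 0)%:E.
  by apply/funext => x; rewrite funeposE /= EFin_max.
have -> : ((EFin \o phi)^\-)%E = fun x => (Num.max (- phi x) 0)%:E.
  by apply/funext => x; rewrite funenegE /= EFin_max.
rewrite Pe Ne /= ler_norml.
move: Pb Nb => /andP[p0 pK] /andP[n0 nK].
apply/andP; split; rewrite ?lerBlDr ?lerBrDl; 
  apply: le_trans (_ : _ <= K * fine W + _) _; rewrite ?lerD //; lra.
Qed.
End gen2.

Section geo.
Context (R : realType).

Lemma tnth_le_norm D (x : D.-tuple R) i : `|tnth x i| <= tnorm x.
Proof.
rewrite /tnorm /tdot -sqrtr_sqr; apply: ler_wsqrtr.
rewrite (bigD1 i) //= -expr2 lerDl; apply: sumr_ge0 => j _; by rewrite -expr2 sqr_ge0.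
Qed.

Lemma prod_box D (i0 : 'I_D) (e s : R) :
  \prod_(i < D) (if val i == val i0 then e else s) = e * s ^+ D.-1.
Proof.
rewrite (bigD1 i0) //= eqxx; congr (_ * _).
rewrite (eq_bigr (fun _ => s)); last first.
  by move=> i ii0; rewrite ifF //; apply/negbTE; apply: contra ii0 => /eqP H; apply/eqP/val_inj.
by rewrite prodr_const cardC1 card_ord.
Qed.

End geo.

Section boltz.
Context d (T : measurableType d) (R : realType) (mu : {measure set T -> \bar R}).

Lemma boltz_bound (A B Q : set T) (g : T -> R) (M P : R) : measurable Q ->
  (forall x, 0 <= g x) -> (forall x, g x <= M) -> A `<=` B -> B `\` A `<=` Q ->
  mu Q = P%:E ->
  0 <= expR (- Rintegral mu A g) - expR (- Rintegral mu B g) <=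
    (expR (M * P) - 1) * expR (- Rintegral mu B g).
Proof.
move=> mQ g0 gM AB BAQ muQ.
have M0 : 0 <= M by apply: le_trans (gM point).
have P0 : 0 <= P by rewrite -lee_fin -muQ measure_ge0.
have t0 : 0 <= M * P by rewrite mulr_ge0.
have IAB := @int_mono_dom _ _ _ mu A B g g0 AB.
have IBA := @int_split _ _ _ mu A B Q g M mQ g0 gM AB BAQ.
rewrite muQ -EFinM in IBA.
have IA0 : (0 <= \int[mu]_(x in A) (g x)%:E)%E by apply: integral_ge0 => x _; rewrite lee_fin.
rewrite /Rintegral.
move: IAB IBA IA0; case: (\int[mu]_(x in A) (g x)%:E)%E => [a| |] IAB IBA IA0 //.
- have IB0 : (0 <= \int[mu]_(x in B) (g x)%:E)%E by apply: le_trans IAB.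
  move: IAB IBA IB0; case: (\int[mu]_(x in B) (g x)%:E)%E => [b| |] IAB IBA IB0 //=.
  rewrite !lee_fin in IAB IBA.
  have e1 : expR (- b) <= expR (- a) by rewrite ler_expR lerN2.
  have e2 : expR (- a) <= expR (M * P) * expR (- b).
    by rewrite -expRD ler_expR; lra.
  apply/andP; split; first by rewrite subr_ge0.
  by rewrite mulrBl mul1r lerB.
- have -> : (\int[mu]_(x in B) (g x)%:E)%E = +oo%E.
    by apply/eqP; rewrite eq_le leey /=.
  rewrite /= subrr lexx /=; apply: mulr_ge0; last exact: expR_ge0.
  by rewrite subr_ge0; apply: le_trans (expR_ge1Dx _); rewrite lerDl.
Qed.
End boltz.


Theorem mainTheorem5 (R : realType) (D : nat) : (0 < D)%N ->
  exists c : R,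
  forall (K : nat) (leb : {measure set (D.-tuple R) -> \bar R})
    (mu : probability (PhiM D K) R) (sigma : D.-tuple R -> R)
    (Lam r : R) (l : nat) (Lag : l.+1.-tuple (K.-tuple R) -> R)
    (k : nat) (f : 'rV[R]_k -> R) (g : 'I_k -> testfun D K),
  (0 < K)%N ->
  is_lebesgue leb ->
  is_gaussian leb mu ->
  (* the mollifier sigma *)
  smooth sigma -> (forall x, 0 <= sigma x) ->
  (forall x y, tnorm x = tnorm y -> sigma x = sigma y) ->
  (forall x, 1 <= tnorm x -> sigma x = 0) ->
  Rintegral leb setT sigma = 1 ->
  0 < Lam -> 0 < r ->
  (* the Lagrangian *)
  measurable_fun setT Lag -> (exists B : R, forall v, `|Lag v| <= B) ->
  (forall v, 0 <= Lag v) ->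
  sup (range Lag) * r ^+ D.-1 / Lam <= 1 ->
  (* the cylindrical function F = f(g_1(phi),...,g_k(phi)) *)
  continuous f -> (exists B : R, forall v, `|f v| <= B) ->
  (forall i, is_test (g i)) ->
  let delta := Lam^-1 in
  let M := sup (range Lag) in
  let F := fun phi : PhiM D K => f (\row_i sval phi (g i)) in
  let FTheta := fun phi : PhiM D K => f (\row_i ThetaPhi phi (g i)) in
  let Boltz := fun (A : set (D.-tuple R)) (phi : PhiM D K) =>
    expR (- Rintegral leb A (LagField Lag sigma Lam phi)) in
  `| Rintegral mu setT (fun phi => F phi * FTheta phi *
        (Boltz (ballP (2 * delta) r `|` ballM (2 * delta) r) phi
         - Boltz (tball0 r : set (D.-tuple R)) phi))
     / Rintegral mu setT (Boltz (tball0 r : set (D.-tuple R))) |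
  <= c * sup (range (fun v => `|f v|)) ^+ 2 * (M * r ^+ D.-1 / Lam).
Proof.
move=> D0.
pose c : R := 2 ^+ D.+1 * expR (2 ^+ D.+1).
exists c.
move=> K leb mu sigma Lam r l Lag k f g K0 hleb hgauss _ _ _ _ _ Lam0 r0 _ [BL hBL]
  Lag0 hMr _ [Bf hBf] _.
cbv zeta.
set delta := Lam^-1 in hMr *.
set M := sup (range Lag) in hMr *.
have hasM : has_ubound (range Lag).
  by exists BL => _ [v _ <-]; exact: le_trans (ler_norm _) (hBL v).
have LagM v : Lag v <= M by apply: (ub_le_sup hasM); exists v.
pose v0 : l.+1.-tuple (K.-tuple R) := [tuple [tuple 0 | _ < K] | _ < l.+1].
have M0 : 0 <= M := le_trans (Lag0 v0) (LagM v0).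
set S := sup (range (fun v => `|f v|)).
have hasS : has_ubound (T:=R) (range (fun v => `|f v|)).
  by exists Bf => _ [v _ <-]; exact: hBf v.
have fS v : `|f v| <= S by apply: (ub_le_sup hasS); exists v.
have S0 : 0 <= S := le_trans (normr_ge0 _) (fS 0).
have delta0 : 0 < delta by rewrite invr_gt0.
have i0lt : (D.-1 < D)%N by rewrite ltn_predL.
pose i0 : 'I_D := Ordinal i0lt.
pose a : D.-tuple R := [tuple (if val i == D.-1 then - (2 * delta) else - r) | i < D].
pose b : D.-tuple R := [tuple (if val i == D.-1 then 2 * delta else r) | i < D].
pose Q := [set x : D.-tuple R | forall i, tnth a i <= tnth x i <= tnth b i].
have ab i : tnth a i <= tnth b i.
  by rewrite !tnth_mktuple; case: ifP => _; lra.
pose P : R := 4 * delta * (2 * r) ^+ D.-1.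
have lebQ : leb Q = P%:E.
  rewrite hleb //; congr (_%:E).
  rewrite (eq_bigr (fun i : 'I_D => if val i == val i0 then 4 * delta else 2 * r)).
    by rewrite prod_box.
  by move=> i _; rewrite !tnth_mktuple /=; case: ifP => _; lra.
have mQ : measurable Q.
  have -> : Q = \bigcap_(i in [set: 'I_D]) ((fun x : D.-tuple R => tnth x i) @^-1` `[tnth a i, tnth b i]).
    apply/seteqP; split => x /=.
      by move=> H i _ /=; rewrite in_itv /=; exact: H.
    by move=> H i; have := H i I; rewrite /= in_itv.
  apply: fin_bigcap_measurable; first exact: finite_finset.
  move=> i _; rewrite -[X in measurable X]setTI.
  exact: measurable_tnth.
pose A : set (D.-tuple R) := ballP (2 * delta) r `|` ballM (2 * delta) r.
pose B := tball0 r : set (D.-tuple R).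
have AB : A `<=` B by move=> x [[]|[]].
have BAQ : B `\` A `<=` Q.
  move=> x [xB nA] i; rewrite !tnth_mktuple.
  case: ifP => /eqP hi.
    have lx : lastc x = tnth x i by rewrite /lastc (tnth_nth 0) hi.
    apply/andP; split; rewrite leNgt; apply/negP => h; apply: nA.
      by right; split => //; rewrite /= lx.
    by left; split => //; rewrite /= lx.
  rewrite -ler_norml; apply: ltW; exact: le_lt_trans (@tnth_le_norm _ _ x i) xB.
pose bz (X : set (D.-tuple R)) (phi : PhiM D K) :=
  expR (- Rintegral leb X (LagField Lag sigma Lam phi)).
have hb phi : 0 <= bz A phi - bz B phi <= (expR (M * P) - 1) * bz B phi.
  exact: (@boltz_bound _ _ _ leb A B Q (LagField Lag sigma Lam phi) M P mQ
    (fun x => Lag0 _) (fun x => LagM _) AB BAQ lebQ).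
have bzB01 phi : 0 <= bz B phi <= 1.
  rewrite expR_ge0 /= expR_le1 oppr_le0; apply: fine_ge0.
  by apply: integral_ge0 => x _; rewrite lee_fin; exact: Lag0.
pose E := expR (M * P) - 1.
have E0 : 0 <= E.
  rewrite subr_ge0; apply: le_trans (expR_ge1Dx _); rewrite lerDl.
  apply: mulr_ge0 => //; rewrite /P; apply: mulr_ge0.
    apply: mulr_ge0; lra.
  apply: exprn_ge0; lra.
pose Kc := S ^+ 2 * E.
pose num phi := f (\row_i sval phi (g i)) * f (\row_i ThetaPhi phi (g i)) *
  (bz A phi - bz B phi).
have numb phi : `|num phi| <= Kc * bz B phi.
  have h1 := fS (\row_i sval phi (g i)).
  have h2 := fS (\row_i ThetaPhi phi (g i)).
  have /andP[hd1 hd2] := hb phi.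
  have /andP[hz0 _] := bzB01 phi.
  rewrite /num !normrM (ger0_norm hd1) /Kc.
  have n1 := normr_ge0 (f (\row_i sval phi (g i))).
  have n2 := normr_ge0 (f (\row_i ThetaPhi phi (g i))).
  rewrite -/E in hd2.
  have : `|f (\row_i sval phi (g i))| * `|f (\row_i ThetaPhi phi (g i))| <= S ^+ 2.
    by rewrite expr2; apply: ler_pM.
  move=> h12; apply: le_trans (ler_pM (mulr_ge0 n1 n2) hd1 h12 hd2) _.
  by rewrite mulrA.
have key : `|Rintegral mu setT num| <= Kc * Rintegral mu setT (bz B).
  have [Kc0|Kcpos] := eqVneq Kc 0.
    have n0 y : num y = 0.
      by apply/normr0_eq0/eqP; rewrite eq_le normr_ge0 andbT; have := numb y; rewrite Kc0 mul0r.
    rewrite /Rintegral integral0_eq ?normr0 ?Kc0 ?mul0r //.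
    by move=> x _; rewrite n0.
  apply: int_abs_le => //.
    by have := probability_setT mu; move=> /= ->; exact: ltry.
  by rewrite lt_def Kcpos /Kc mulr_ge0 ?exprn_ge0.
have Den0 : 0 <= Rintegral mu setT (bz B).
  by apply: fine_ge0; apply: integral_ge0 => x _; rewrite lee_fin; case/andP: (bzB01 x).
have ratio : `|Rintegral mu setT num / Rintegral mu setT (bz B)| <= Kc.
  have [->|Dn0] := eqVneq (Rintegral mu setT (bz B)) 0.
    by rewrite invr0 mulr0 normr0 /Kc mulr_ge0 ?exprn_ge0.
  have Dpos : 0 < Rintegral mu setT (bz B) by rewrite lt_def Dn0 Den0.
  by rewrite normrM normrV ?unitfE // (gtr0_norm Dpos) ler_pdivrMr.
refine (le_trans ratio _).
set u := M * r ^+ D.-1 * delta.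
have u0 : 0 <= u by rewrite /u; apply: mulr_ge0; [apply: mulr_ge0 => //; apply: exprn_ge0|]; lra.
have e2 : forall n, (0 < n)%N -> (2:R) ^+ n.+1 = 4 * 2 ^+ n.-1.
  by case=> // n _; rewrite !exprS /=; ring.
have ht : M * P = 2 ^+ D.+1 * u.
  by rewrite /P /u exprMn (e2 _ D0); ring.
have p0 : (0:R) <= 2 ^+ D.+1 by apply: exprn_ge0.
have hE : E <= c * u.
  have h := expR_ge1Dx (- (M * P)); rewrite expRN in h.
  have h' := ler_wpM2r (expR_ge0 (M * P)) h.
  rewrite mulVf ?gt_eqF ?expR_gt0 // in h'.
  have et : expR (M * P) <= expR (2 ^+ D.+1).
    by rewrite ler_expR ht; apply: ler_piMr.
  have t0 : 0 <= M * P by rewrite ht mulr_ge0.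
  have h3 : M * P * expR (M * P) <= M * P * expR (2 ^+ D.+1) by apply: ler_wpM2l.
  rewrite /E /c.
  have -> : 2 ^+ D.+1 * expR (2 ^+ D.+1) * u = M * P * expR (2 ^+ D.+1) by rewrite ht; ring.
  move: h' h3; set t := M * P; set e := expR t; set e' := expR (2 ^+ D.+1).
  move=> h' h3; nra.
rewrite /Kc; apply: le_trans (ler_wpM2l (exprn_ge0 2 S0) hE) _.
by rewrite mulrA (mulrC (S ^+ 2)).
Qed.
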